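(* Let $1\le r\le s\le t$ and let $u=ABCd$, $v=A'B'C'd'$ be distinct vertices of $E3C(r,s,t)$ with $B=B'$, $C=C'$ and $d=d'$ (any $d\in\{0,1,2\}$). Then there exist $2r+2$ pairwise internally disjoint $u$–$v$ paths in $E3C(r,s,t)$, each of length at most $r+6$.
   Context: The exchanged 3-ary $n$-cube $E3C(r,s,t)$ ($r,s,t\ge1$, $n=r+s+t+1$): vertices are strings written $x=ABCd$ with $A\in\{0,1,2\}^r$, $B\in\{0,1,2\}^s$, $C\in\{0,1,2\}^t$, $d\in\{0,1,2\}$. Two distinct vertices $x=ABCd$, $y=A'B'C'd'$ are adjacent iff one of: (E0) $A=A',B=B',C=C'$ and $d\ne d'$; (E1) $d=d'=0$, $A=A'$, $B=B'$ and $C,C'$ differ in exactly one position; (E2) $d=d'=1$, $A=A'$, $C=C'$ and $B,B'$ differ in exactly one position; (E3) $d=d'=2$, $B=B'$, $C=C'$ and $A,A'$ differ in exactly one position. Paths are internally disjoint if they share no vertices other than their endpoints; length = number of edges. *)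

(* Defs.v *)
From mathcomp Require Import all_boot.
Set Implicit Arguments. Unset Strict Implicit. Unset Printing Implicit Defensive.

Definition E3Cvert (r s t : nat) : finType :=
  ({ffun 'I_r -> 'I_3} * {ffun 'I_s -> 'I_3} * {ffun 'I_t -> 'I_3} * 'I_3)%type.

Section E3C.
Variables r s t : nat.

Definition vA (x : E3Cvert r s t) : {ffun 'I_r -> 'I_3} := x.1.1.1.
Definition vB (x : E3Cvert r s t) : {ffun 'I_s -> 'I_3} := x.1.1.2.
Definition vC (x : E3Cvert r s t) : {ffun 'I_t -> 'I_3} := x.1.2.
Definition vd (x : E3Cvert r s t) : 'I_3 := x.2.

Definition diff1 (n : nat) (f g : {ffun 'I_n -> 'I_3}) : bool :=
  #|[set i | f i != g i]| == 1.

Definition E3C_adj (x y : E3Cvert r s t) : bool :=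
  [|| [&& vA x == vA y, vB x == vB y, vC x == vC y & vd x != vd y]
    , [&& (vd x == 0 :> nat), (vd y == 0 :> nat), vA x == vA y, vB x == vB y
          & diff1 (vC x) (vC y)]
    , [&& (vd x == 1 :> nat), (vd y == 1 :> nat), vA x == vA y, vC x == vC y
          & diff1 (vB x) (vB y)]
    | [&& (vd x == 2 :> nat), (vd y == 2 :> nat), vB x == vB y, vC x == vC y
          & diff1 (vA x) (vA y)] ].
End E3C.

(* A (simple) u-v path in a graph with adjacency e, written as the vertex
   sequence u :: p; its length is size p. *)
Definition is_uv_path (T : eqType) (e : rel T) (u v : T) (p : seq T) : Prop :=
  [/\ path e u p, last u p = v & uniq (u :: p)].

Definition internal_vertices (T : eqType) (u v : T) (p : seq T) : seq T :=
  [seq x <- p | (x != u) && (x != v)].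

Definition internally_disjoint (T : eqType) (u v : T) (p q : seq T) : Prop :=
  forall x, x \in internal_vertices u v p -> x \notin internal_vertices u v q.

(* Main.v *)
Require Import Defs.
From mathcomp Require Import all_boot zify.
Set Implicit Arguments. Unset Strict Implicit. Unset Printing Implicit Defensive.

Lemma size_shorten (T : eqType) (e : rel T) x (p : seq T) : size (shorten x p) <= size p.
Proof.
elim: p x => [|y p IH] x //=.
case: ifP => _; first by apply: leq_trans (IH x) _.
by rewrite ltnS.
Qed.

Lemma frame (T : eqType) (e : rel T) (u v : T) N (L : eqType)
  (label : 'I_N -> L) (dec : T -> L) (W : 'I_N -> seq T) (h : 'I_N -> T) M :
  u != v -> injective label -> (forall n, dec (h n) = label n) ->
  (forall n, path e u (W n)) -> (forall n, last u (W n) = v) ->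
  (forall n, u \notin W n) -> (forall n, size (W n) <= M) ->
  (forall n x, x \in W n -> x != v -> dec x = label n) ->
  (forall n, head u (W n) = h n) ->
  exists P : 'I_N -> seq T,
    (forall n, is_uv_path e u v (P n) /\ size (P n) <= M) /\
    (forall n m, n != m -> P n != P m /\ internally_disjoint u v (P n) (P m)).
Proof.
move=> uv linj hdec Hp Hl Hu Hs Hd Hh.
have hd n : head u (shorten u (W n)) = h n.
  rewrite -Hh; case E: (W n) => [|y p] /=.
    by move: (Hl n) uv; rewrite E /= => ->; rewrite eqxx.
  by have := Hu n; rewrite E => /negbTE ->.
have sub n : {subset shorten u (W n) <= W n}.
  by case: (shortenP (Hp n)).
exists (fun n => shorten u (W n)); split.
  move=> n; split; last by apply: leq_trans (size_shorten e _ _) (Hs n).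
  have := Hl n; case: (shortenP (Hp n)) => p' pp' up' _ lp; split => //.
move=> n m nm; split.
  apply/negP => /eqP E; move: nm; rewrite -(inj_eq linj) -hdec -hdec -hd -(hd m) E eqxx.
  by [].
move=> x; rewrite /internal_vertices !mem_filter => /andP[/andP[xu xv] xn].
apply/negP => /andP[_ xm].
move: nm; rewrite -(inj_eq linj) -(Hd n x (sub _ _ xn) xv) -(Hd m x (sub _ _ xm) xv).
by rewrite eqxx.
Qed.

Definition L0 : 'I_3 := @Ordinal 3 0 isT.
Definition L1 : 'I_3 := @Ordinal 3 1 isT.
Definition L2 : 'I_3 := @Ordinal 3 2 isT.

Definition upd n (f : {ffun 'I_n -> 'I_3}) (i : nat) (a : 'I_3) : {ffun 'I_n -> 'I_3} :=
  [ffun j : 'I_n => if val j == i then a else f j].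
Definition ats n (f : {ffun 'I_n -> 'I_3}) (i : nat) : 'I_3 :=
  if @insub _ (fun k => k < n) _ i is Some j then f j else L0.

Lemma ats_val n (f : {ffun 'I_n -> 'I_3}) (j : 'I_n) : ats f (val j) = f j.
Proof. by rewrite /ats valK. Qed.

Lemma upd_val n (f : {ffun 'I_n -> 'I_3}) i a (j : 'I_n) :
  upd f i a j = if val j == i then a else f j.
Proof. by rewrite ffunE. Qed.

Lemma diff1_upd n (f : {ffun 'I_n -> 'I_3}) (j : 'I_n) a :
  a != f j -> diff1 f (upd f j a).
Proof.
move=> af; rewrite /diff1.
have -> : [set k | f k != upd f j a k] = [set j].
  apply/setP => k; rewrite !inE ffunE val_eqE.
  by case: (eqVneq k j) => [->|]; rewrite ?eqxx // eq_sym.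
by rewrite cards1.
Qed.

Lemma diff1_sym n (f g : {ffun 'I_n -> 'I_3}) : diff1 f g = diff1 g f.
Proof.
rewrite /diff1.
by have -> : [set i | f i != g i] = [set i | g i != f i] by apply/setP => i; rewrite !inE eq_sym.
Qed.

Fixpoint walk n (X Y : {ffun 'I_n -> 'I_3}) (l : seq 'I_n) : seq {ffun 'I_n -> 'I_3} :=
  if l is p :: l' then upd X p (Y p) :: walk (upd X p (Y p)) Y l' else [::].

Definition wseq n (X Y : {ffun 'I_n -> 'I_3}) := walk X Y (enum [pred j | X j != Y j]).

Lemma walk_path n (X Y : {ffun 'I_n -> 'I_3}) l :
  uniq l -> {in l, forall j, X j != Y j} -> path (@diff1 n) X (walk X Y l).
Proof.
elim: l X => [|p l IH] X //= /andP[pl ul] H.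
apply/andP; split.
  by apply: diff1_upd; rewrite eq_sym H // mem_head.
apply: IH => // j jl; rewrite upd_val val_eqE.
have -> : (j == p) = false by apply/negP => /eqP E; move: pl; rewrite -E jl.
by apply: H; rewrite inE jl orbT.
Qed.

Lemma walk_last n (X Y : {ffun 'I_n -> 'I_3}) l :
  (forall j, X j != Y j -> j \in l) -> last X (walk X Y l) = Y.
Proof.
elim: l X => [|p l IH] X /= H.
  by apply/ffunP => j; case: (eqVneq (X j) (Y j)) => // /H.
apply: IH => j; rewrite upd_val val_eqE.
case: (eqVneq j p) => [->|jp]; first by rewrite eqxx.
by move/H; rewrite inE (negbTE jp).
Qed.

Lemma walk_mem n (X Y : {ffun 'I_n -> 'I_3}) l Z :
  Z \in walk X Y l -> forall j, (Z j == X j) || (Z j == Y j).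
Proof.
elim: l X => [|p l IH] X //=; rewrite inE => /orP[/eqP -> | /IH H] j.
  by rewrite upd_val; case: ifP => [/eqP/ord_inj ->|]; rewrite eqxx ?orbT.
move: (H j); rewrite upd_val. case: ifP => [/eqP/ord_inj -> |] //.
by rewrite orbb => ->; rewrite orbT.
Qed.

Lemma walk_size n (X Y : {ffun 'I_n -> 'I_3}) l : size (walk X Y l) = size l.
Proof. by elim: l X => [|p l IH] X //=; rewrite IH. Qed.

Lemma wseq_path n (X Y : {ffun 'I_n -> 'I_3}) : path (@diff1 n) X (wseq X Y).
Proof. by apply: walk_path; [apply: enum_uniq | move=> j; rewrite mem_enum]. Qed.

Lemma wseq_last n (X Y : {ffun 'I_n -> 'I_3}) : last X (wseq X Y) = Y.
Proof. by apply: walk_last => j; rewrite mem_enum. Qed.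

Lemma wseq_size n (X Y : {ffun 'I_n -> 'I_3}) : size (wseq X Y) = #|[pred j | X j != Y j]|.
Proof. by rewrite /wseq walk_size cardE. Qed.

Lemma wseq_mem n (X Y : {ffun 'I_n -> 'I_3}) Z :
  Z \in wseq X Y -> forall j, (Z j == X j) || (Z j == Y j).
Proof. exact: walk_mem. Qed.

Lemma wseq_size_le n (X Y : {ffun 'I_n -> 'I_3}) : size (wseq X Y) <= n.
Proof. by rewrite wseq_size; apply: leq_trans (max_card _) _; rewrite card_ord. Qed.

Section Adj.
Variables r s t : nat.
Notation V := (E3Cvert r s t).
Implicit Types (A : {ffun 'I_r -> 'I_3}) (B : {ffun 'I_s -> 'I_3}) (C : {ffun 'I_t -> 'I_3}).

Lemma adjE0 A B C (d d' : 'I_3) : d != d' -> @E3C_adj r s t (A,B,C,d) (A,B,C,d').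
Proof. by move=> dd; rewrite /E3C_adj /vA /vB /vC /vd /= !eqxx dd. Qed.

Lemma adjE1 A B C C' : diff1 C C' -> @E3C_adj r s t (A,B,C,L0) (A,B,C',L0).
Proof. by move=> h; rewrite /E3C_adj /vA /vB /vC /vd /= !eqxx h /= orbT. Qed.

Lemma adjE2 A B B' C : diff1 B B' -> @E3C_adj r s t (A,B,C,L1) (A,B',C,L1).
Proof. by move=> h; rewrite /E3C_adj /vA /vB /vC /vd /= !eqxx h /= !orbT. Qed.

Lemma adjE3 A A' B C : diff1 A A' -> @E3C_adj r s t (A,B,C,L2) (A',B,C,L2).
Proof. by move=> h; rewrite /E3C_adj /vA /vB /vC /vd /= !eqxx h /= !orbT. Qed.

Definition lift2 B C (Z : {ffun 'I_r -> 'I_3}) : V := (Z, B, C, L2).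

Lemma lift_path B C X (sq : seq {ffun 'I_r -> 'I_3}) :
  path (@diff1 r) X sq -> path (@E3C_adj r s t) (lift2 B C X) (map (lift2 B C) sq).
Proof.
elim: sq X => [|Z sq IH] X //= /andP[h1 h2].
by rewrite adjE3 // IH.
Qed.

Lemma lift_wseq B C X Y :
  path (@E3C_adj r s t) (lift2 B C X) (map (lift2 B C) (wseq X Y)) /\
  last (lift2 B C X) (map (lift2 B C) (wseq X Y)) = lift2 B C Y.
Proof. by split; [apply: lift_path; apply: wseq_path | rewrite last_map wseq_last]. Qed.
End Adj.

Definition ab (b : bool) (x : 'I_3) : 'I_3 := if b then ordS (ordS x) else ordS x.

Lemma ab_neq b x : ab b x != x.
Proof. by case: b; case: x => [[|[|[|m]]] Hx] //; apply/eqP => /(f_equal val) /=. Qed.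

Lemma ab_inj x : ab false x != ab true x.
Proof. by case: x => [[|[|[|m]]] Hx] //; apply/eqP => /(f_equal val) /=. Qed.

Lemma ats_upd n (f : {ffun 'I_n -> 'I_3}) i a j :
  j < n -> ats (upd f i a) j = if j == i then a else ats f j.
Proof.
move=> jn; have -> : j = val (Ordinal jn) by [].
by rewrite !ats_val upd_val.
Qed.

Lemma pick_uniq (T : finType) (P : pred T) x :
  P x -> (forall y, P y -> y = x) -> [pick y | P y] = Some x.
Proof. by move=> Px H; case: pickP => [y /H -> //|/(_ x)]; rewrite Px. Qed.

Definition lab r (g : nat -> 'I_3) (n : nat) : (nat * 'I_3) + bool :=
  if n < 2 * r then inl (n./2, ab (odd n) (g n./2)) else inr (n == 2 * r).

Lemma lab_inj r g : injective (fun n : 'I_(2 * r + 2) => lab r g n).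
Proof.
move=> n m; rewrite /lab.
case: ltnP => hn; case: ltnP => hm //.
  case=> e1 e2; apply: val_inj => /=.
  rewrite -[val n]odd_double_half -[val m]odd_double_half e1.
  congr (_ + _); move: e2; rewrite e1.
  case: (odd n); case: (odd m) => // /eqP; rewrite ?(negbTE (ab_inj _)) //.
  by rewrite eq_sym (negbTE (ab_inj _)).
case=> e; apply: val_inj => /=; move: e (ltn_ord n) (ltn_ord m) hn hm.
case: (eqVneq (nat_of_ord n) (2 * r)) => En; case: (eqVneq (nat_of_ord m) (2 * r)) => Em //= _; lia.
Qed.

Lemma half_lt n r : n < 2 * r -> n./2 < r.
Proof. by move=> h; rewrite ltn_half_double -mul2n. Qed.

Lemma mid_path r s t (B : {ffun 'I_s -> 'I_3}) (C : {ffun 'I_t -> 'I_3}) X Y (rest : seq (E3Cvert r s t)) :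
  path (@E3C_adj r s t) (lift2 B C Y) rest ->
  path (@E3C_adj r s t) (lift2 B C X) (map (lift2 B C) (wseq X Y) ++ rest).
Proof. by move=> h; rewrite cat_path; case: (lift_wseq B C X Y) => -> ->. Qed.

Lemma last_end (T : Type) (x v : T) s1 s2 : last x (s1 ++ s2 ++ [:: v]) = v.
Proof. by rewrite !last_cat. Qed.

Lemma upd_neq n (f : {ffun 'I_n -> 'I_3}) i a : i < n -> a != ats f i -> upd f i a != f.
Proof.
move=> hi ha; apply/eqP => E; move: ha; rewrite -[X in ats X i]E ats_upd // eqxx.
by rewrite eqxx.
Qed.

Lemma dec_pick n m (Cx : {ffun 'I_n -> 'I_3}) i a (hi : i < m) (hm : m <= n) :
  a != ats Cx i ->
  [pick j : 'I_m | ats (upd Cx i a) j != ats Cx j] = Some (Ordinal hi).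
Proof.
move=> ha; apply: pick_uniq => [|y]; first by rewrite /= ats_upd ?eqxx //; lia.
rewrite ats_upd; last by have := ltn_ord y; lia.
by case: (eqVneq (nat_of_ord y) i) => [E _|]; [apply: val_inj | rewrite eqxx].
Qed.

Lemma pick_none n m (Cx : {ffun 'I_n -> 'I_3}) :
  [pick j : 'I_m | ats Cx j != ats Cx j] = None.
Proof. by case: pickP => [y|//]; rewrite eqxx. Qed.

Lemma diff1_updn n (f : {ffun 'I_n -> 'I_3}) i a : i < n -> a != ats f i -> diff1 f (upd f i a).
Proof.
move=> hi; have -> : i = val (Ordinal hi) by [].
by rewrite ats_val; apply: diff1_upd.
Qed.

Lemma diff1_updn' n (f : {ffun 'I_n -> 'I_3}) i a : i < n -> a != ats f i -> diff1 (upd f i a) f.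
Proof. by move=> *; rewrite diff1_sym diff1_updn. Qed.

Module M0.

Section Case0.
Variables (r s t : nat) (hr : 1 <= r) (hrs : r <= s) (hst : s <= t).
Variables (A A' : {ffun 'I_r -> 'I_3}) (B : {ffun 'I_s -> 'I_3}) (C : {ffun 'I_t -> 'I_3}).
Hypothesis hAA : A != A'.
Notation V := (E3Cvert r s t).
Notation adj := (@E3C_adj r s t).
Let u : V := (A, B, C, L0).
Let v : V := (A', B, C, L0).

Let Ci i b := upd C i (ab b (ats C i)).
Let B1 := upd B 0 (ordS (ats B 0)).
Let Wi i b : seq V := [:: (A, B, Ci i b, L0); lift2 B (Ci i b) A] ++
   map (lift2 B (Ci i b)) (wseq A A') ++ [:: (A', B, Ci i b, L0); v].
Let WE0 : seq V := lift2 B C A :: map (lift2 B C) (wseq A A') ++ [:: v].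
Let WE1 : seq V := [:: (A, B, C, L1); (A, B1, C, L1); lift2 B1 C A] ++
   map (lift2 B1 C) (wseq A A') ++ [:: (A', B1, C, L1); (A', B, C, L1); v].
Let W (n : 'I_(2 * r + 2)) : seq V :=
  if n < 2 * r then Wi n./2 (odd n) else if n == 2 * r :> nat then WE0 else WE1.

Let dec (x : V) : (nat * 'I_3) + bool :=
  let: (X, B0, C0, e) := x in
  if B0 != B then inr false
  else if [pick i : 'I_r | ats C0 i != ats C i] is Some i then inl (val i, ats C0 i)
  else inr (e != L1).

Let label (n : 'I_(2 * r + 2)) := lab r (ats C) n.

Lemma B1_neq : B1 != B.
Proof. by apply: upd_neq; [lia | rewrite /ordS; case: (ats B 0) => [[|[|[|]]]]]. Qed.

Lemma Ci_neq i b : i < r -> Ci i b != C.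
Proof. by move=> hi; apply: upd_neq; [lia | apply: ab_neq]. Qed.

Lemma decCi i b X e : i < r -> dec (X, B, Ci i b, e) = inl (i, ab b (ats C i)).
Proof.
move=> hi; rewrite /dec eqxx /= (@dec_pick _ _ C i (ab b (ats C i)) hi (leq_trans hrs hst)) ?ab_neq //=.
by rewrite ats_upd ?eqxx //; lia.
Qed.

Lemma decC X e : dec (X, B, C, e) = inr (e != L1).
Proof. by rewrite /dec eqxx /= pick_none. Qed.

Lemma decB1 X C0 e : dec (X, B1, C0, e) = inr false.
Proof. by rewrite /dec B1_neq. Qed.

Theorem case0 : exists P : 'I_(2 * r + 2) -> seq V,
    (forall i, is_uv_path adj u v (P i) /\ size (P i) <= r + 6) /\
    (forall i j, i != j -> P i != P j /\ internally_disjoint u v (P i) (P j)).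
Proof.
have uv : u != v by rewrite /u /v !xpair_eqE (negbTE hAA).
have Hdec : forall n x, x \in W n -> x != v -> dec x = label n.
  move=> n x; rewrite /W /label /lab; case: ltnP => hn.
    have hi := half_lt hn.
    rewrite /Wi !(mem_cat, inE) => /orP[/orP[/eqP->|/eqP->]|/orP[/mapP[Z _ ->]|/orP[/eqP->|/eqP->]]];
      by rewrite ?eqxx // decCi.
  case: eqP => _.
    rewrite /WE0 !(mem_cat, inE) => /orP[/eqP->|/orP[/mapP[Z _ ->]|/eqP->]];
      by rewrite ?eqxx // decC.
  rewrite /WE1 !(mem_cat, inE).
  move=> /orP[/orP[/eqP->|/orP[/eqP->|/eqP->]]|/orP[/mapP[Z _ ->]|/orP[/eqP->|/orP[/eqP->|/eqP->]]]];
    by rewrite ?eqxx // ?decC ?decB1.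
apply: (@frame _ adj u v _ _ (fun n => lab r (ats C) n) dec W (fun n => head u (W n)) (r + 6) uv (@lab_inj r (ats C))) => //.
- move=> n; rewrite /W /label /lab; case: ltnP => hn.
    by rewrite [head _ _]/= decCi //; apply: half_lt.
  case: eqP => _; by rewrite [head _ _]/= decC.
- move=> n; rewrite /W; case: ltnP => hn.
    have hi := half_lt hn; have hit : n./2 < t by lia.
    rewrite /= adjE1 ?diff1_updn ?ab_neq //= adjE0 //=.
    by apply: mid_path; rewrite /= adjE0 //= adjE1 ?diff1_updn' ?ab_neq.
  have hs : 0 < s by lia.
  case: eqP => _.
    by rewrite /= adjE0 //=; apply: mid_path; rewrite /= adjE0.
  rewrite /= adjE0 //= adjE2 ?diff1_updn ?adjE0 //=; last by rewrite /ordS; case: (ats B 0) => [[|[|[|]]]].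
  apply: mid_path; rewrite /= adjE0 //= adjE2 ?diff1_updn' ?adjE0 //.
  by rewrite /ordS; case: (ats B 0) => [[|[|[|]]]].
- move=> n; rewrite /W; case: ltnP => hn; first by rewrite /= !last_cat.
  by case: eqP => _; rewrite /= !last_cat.
- move=> n; apply/negP => un.
  have := Hdec n u un uv; rewrite decC /label /lab /W.
  case: ltnP => hn //; case=> /esym/eqP E.
  move: un; rewrite /W ltnNge hn /= E eqxx /WE0 !(mem_cat, inE).
  case/or3P => [/eqP[]|/mapP[Z _ []]|/eqP[]] //.
  by move=> E0; move: hAA; rewrite E0 eqxx.
- move=> n; rewrite /W; have := wseq_size_le A A'.
  by case: ltnP => hn; [|case: eqP => _]; rewrite /= !size_cat size_map /=; lia.
Qed.
End Case0.

End M0.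

Module M1.

Section Case1.
Variables (r s t : nat) (hr : 1 <= r) (hrs : r <= s) (hst : s <= t).
Variables (A A' : {ffun 'I_r -> 'I_3}) (B : {ffun 'I_s -> 'I_3}) (C : {ffun 'I_t -> 'I_3}).
Hypothesis hAA : A != A'.
Notation V := (E3Cvert r s t).
Notation adj := (@E3C_adj r s t).
Let u : V := (A, B, C, L1).
Let v : V := (A', B, C, L1).

Let Bi i b := upd B i (ab b (ats B i)).
Let C1 := upd C 0 (ordS (ats C 0)).
Let Wi i b : seq V := [:: (A, Bi i b, C, L1); lift2 (Bi i b) C A] ++
   map (lift2 (Bi i b) C) (wseq A A') ++ [:: (A', Bi i b, C, L1); v].
Let WE0 : seq V := lift2 B C A :: map (lift2 B C) (wseq A A') ++ [:: v].
Let WE1 : seq V := [:: (A, B, C, L0); (A, B, C1, L0); lift2 B C1 A] ++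
   map (lift2 B C1) (wseq A A') ++ [:: (A', B, C1, L0); (A', B, C, L0); v].
Let W (n : 'I_(2 * r + 2)) : seq V :=
  if n < 2 * r then Wi n./2 (odd n) else if n == 2 * r :> nat then WE0 else WE1.

Let dec (x : V) : (nat * 'I_3) + bool :=
  let: (X, B0, C0, e) := x in
  if C0 != C then inr false
  else if [pick i : 'I_r | ats B0 i != ats B i] is Some i then inl (val i, ats B0 i)
  else inr (e != L0).

Let label (n : 'I_(2 * r + 2)) := lab r (ats B) n.

Lemma C1_neq : C1 != C.
Proof. by apply: upd_neq; [lia | rewrite /ordS; case: (ats C 0) => [[|[|[|]]]]]. Qed.

Lemma Bi_neq i b : i < r -> Bi i b != B.
Proof. by move=> hi; apply: upd_neq; [lia | apply: ab_neq]. Qed.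

Lemma decBi i b X e : i < r -> dec (X, Bi i b, C, e) = inl (i, ab b (ats B i)).
Proof.
move=> hi; rewrite /dec eqxx /= (@dec_pick _ _ B i (ab b (ats B i)) hi hrs) ?ab_neq //=.
by rewrite ats_upd ?eqxx //; lia.
Qed.

Lemma decB X e : dec (X, B, C, e) = inr (e != L0).
Proof. by rewrite /dec eqxx /= pick_none. Qed.

Lemma decC1 X B0 e : dec (X, B0, C1, e) = inr false.
Proof. by rewrite /dec C1_neq. Qed.

Theorem case1 : exists P : 'I_(2 * r + 2) -> seq V,
    (forall i, is_uv_path adj u v (P i) /\ size (P i) <= r + 6) /\
    (forall i j, i != j -> P i != P j /\ internally_disjoint u v (P i) (P j)).
Proof.
have uv : u != v by rewrite /u /v !xpair_eqE (negbTE hAA).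
have Hdec : forall n x, x \in W n -> x != v -> dec x = label n.
  move=> n x; rewrite /W /label /lab; case: ltnP => hn.
    have hi := half_lt hn.
    rewrite /Wi !(mem_cat, inE) => /orP[/orP[/eqP->|/eqP->]|/orP[/mapP[Z _ ->]|/orP[/eqP->|/eqP->]]];
      by rewrite ?eqxx // decBi.
  case: eqP => _.
    rewrite /WE0 !(mem_cat, inE) => /orP[/eqP->|/orP[/mapP[Z _ ->]|/eqP->]];
      by rewrite ?eqxx // decB.
  rewrite /WE1 !(mem_cat, inE).
  move=> /orP[/orP[/eqP->|/orP[/eqP->|/eqP->]]|/orP[/mapP[Z _ ->]|/orP[/eqP->|/orP[/eqP->|/eqP->]]]];
    by rewrite ?eqxx // ?decB ?decC1.
apply: (@frame _ adj u v _ _ (fun n => lab r (ats B) n) dec W (fun n => head u (W n)) (r + 6) uv (@lab_inj r (ats B))) => //.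
- move=> n; rewrite /W /label /lab; case: ltnP => hn.
    by rewrite [head _ _]/= decBi //; apply: half_lt.
  case: eqP => _; by rewrite [head _ _]/= decB.
- move=> n; rewrite /W; case: ltnP => hn.
    have hi := half_lt hn; have hit : n./2 < s by lia.
    rewrite /= adjE2 ?diff1_updn ?ab_neq //= adjE0 //=.
    by apply: mid_path; rewrite /= adjE0 //= adjE2 ?diff1_updn' ?ab_neq.
  have hs : 0 < t by lia.
  case: eqP => _.
    by rewrite /= adjE0 //=; apply: mid_path; rewrite /= adjE0.
  rewrite /= adjE0 //= adjE1 ?diff1_updn ?adjE0 //=; last by rewrite /ordS; case: (ats C 0) => [[|[|[|]]]].
  apply: mid_path; rewrite /= adjE0 //= adjE1 ?diff1_updn' ?adjE0 //.
  by rewrite /ordS; case: (ats C 0) => [[|[|[|]]]].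
- move=> n; rewrite /W; case: ltnP => hn; first by rewrite /= !last_cat.
  by case: eqP => _; rewrite /= !last_cat.
- move=> n; apply/negP => un.
  have := Hdec n u un uv; rewrite decB /label /lab /W.
  case: ltnP => hn //; case=> /esym/eqP E.
  move: un; rewrite /W ltnNge hn /= E eqxx /WE0 !(mem_cat, inE).
  case/or3P => [/eqP[]|/mapP[Z _ []]|/eqP[]] //.
  by move=> E0; move: hAA; rewrite E0 eqxx.
- move=> n; rewrite /W; have := wseq_size_le A A'.
  by case: ltnP => hn; [|case: eqP => _]; rewrite /= !size_cat size_map /=; lia.
Qed.
End Case1.

End M1.

Module M2.

Definition sig (e : seq nat) (i : nat) := nth i e ((index i e).+1 %% size e).

Lemma sig_mem e i : 0 < size e -> sig e i \in e.
Proof. by move=> h; rewrite /sig mem_nth // ltn_pmod. Qed.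

Lemma sig_idx e i : uniq e -> 0 < size e -> index (sig e i) e = (index i e).+1 %% size e.
Proof. by move=> ue h; rewrite /sig index_uniq // ltn_pmod. Qed.

Lemma sig_neq e i : uniq e -> i \in e -> 1 < size e -> sig e i != i.
Proof.
move=> ue ie h; apply/eqP => E.
have := sig_idx i ue (ltnW h); rewrite E.
have := index_mem i e; rewrite ie => hm.
case: (ltnP (index i e).+1 (size e)) => h2.
  by rewrite modn_small // => /n_Sn.
have -> : (index i e).+1 = size e by apply/eqP; rewrite eqn_leq h2 hm.
rewrite modnn => E0; move: hm h h2 E0; move: (index i e) (size e) => a b.
move=> H1 H2 H3 H4; subst a; move: H1 H2 H3; case: b => [|[|b]] //.
Qed.

Lemma sig_inj e i j : uniq e -> i \in e -> j \in e -> sig e i = sig e j -> i = j.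
Proof.
move=> ue ie je E.
have h : 0 < size e by case: e ie {ue je E}.
have := sig_idx i ue h; rewrite E sig_idx // => /eqP.
rewrite -[(index j e).+1]addn1 -[(index i e).+1]addn1 eqn_modDr !modn_small ?index_mem // => /eqP E2.
by rewrite -(nth_index i ie) -E2 nth_index.
Qed.

Section Case2.
Variables (r s t : nat) (hr : 1 <= r) (hrs : r <= s) (hst : s <= t).
Variables (A A' : {ffun 'I_r -> 'I_3}) (B : {ffun 'I_s -> 'I_3}) (C : {ffun 'I_t -> 'I_3}).
Hypothesis hAA : A != A'.
Notation V := (E3Cvert r s t).
Notation adj := (@E3C_adj r s t).

Definition Dset := [set j : 'I_r | A j != A' j].
Definition kk := #|Dset|.
Definition es := [seq val j | j <- enum Dset].
Definition sg i := sig es i.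
Definition inD i := (i < r) && (ats A i != ats A' i).

Lemma es_uniq : uniq es.
Proof. by rewrite map_inj_uniq ?enum_uniq //; apply: val_inj. Qed.

Lemma es_size : size es = kk.
Proof. by rewrite size_map -cardE. Qed.

Lemma mem_es i : (i \in es) = inD i.
Proof.
rewrite /inD; case: ltnP => hi /=.
  have -> : i = val (Ordinal hi) by [].
  by rewrite mem_map ?mem_enum ?inE ?ats_val //; apply: val_inj.
by apply/negP => /mapP[j _ E]; move: hi; rewrite E leqNgt ltn_ord.
Qed.

Lemma inD_ord (j : 'I_r) : inD j = (A j != A' j).
Proof. by rewrite /inD ltn_ord !ats_val. Qed.

Lemma kk_pos : 0 < kk.
Proof.
rewrite /kk card_gt0; apply/set0Pn.
have [j hj] : exists j, A j != A' j.
  by apply/existsP; move: hAA; apply: contraR; rewrite negb_exists => /forallP H;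
     apply/eqP/ffunP => j; apply/eqP; move: (H j); rewrite negbK.
by exists j; rewrite inE.
Qed.

Lemma kk_le : kk <= r.
Proof. by rewrite /kk; apply: leq_trans (max_card _) _; rewrite card_ord. Qed.

Lemma sg_inD i : inD i -> inD (sg i).
Proof. by move=> _; rewrite -mem_es /sg sig_mem // es_size kk_pos. Qed.

Lemma sg_neq i : inD i -> 1 < kk -> sg i != i.
Proof. by move=> hi hk; rewrite /sg sig_neq ?es_uniq ?mem_es ?es_size. Qed.

Lemma sg_inj i j : inD i -> inD j -> sg i = sg j -> i = j.
Proof. by move=> hi hj; apply: sig_inj; rewrite ?es_uniq ?mem_es. Qed.

Definition Xv i := upd A i (ats A' i).
Definition Yv i := upd A' (sg i) (ats A (sg i)).
Definition Ct i := upd C i (ordS (ats C i)).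
Definition C2 := upd C 0 (ordS (ordS (ats C 0))).
Definition B1 := upd B 0 (ordS (ats B 0)).

Definition dec (x : V) : (nat * 'I_3) + bool :=
  let: (X, B0, C0, e) := x in
  if B0 != B then inr false
  else if C0 == C2 then inr true
  else if [pick i : 'I_r | ats C0 i != ats C i] is Some i then inl (val i, A' i)
  else if e == L1 then inr false
  else if (e == L0) && ((X == A) || (X == A')) then inr true
  else if [pick j : 'I_r | (X j != A j) && (X j != A' j)] is Some j then inl (val j, X j)
  else if [pick i : 'I_r | (A i != A' i) && (X == upd A i (A' i))] is Some i then inl (val i, A' i)
  else if [pick j : 'I_r | (A j != A' j) && (X == upd A' j (A j))] is Some j then
     (if [pick i : 'I_r | (A i != A' i) && (sg i == j)] is Some i then inl (val i, A' i) else inr true)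
  else inr true.

Lemma ordS_neq (x : 'I_3) : ordS x != x.
Proof. exact: (ab_neq false x). Qed.

Lemma ordSS_neq (x : 'I_3) : ordS (ordS x) != x.
Proof. exact: (ab_neq true x). Qed.

Lemma B1_neq : B1 != B.
Proof. by apply: upd_neq; [lia | apply: ordS_neq]. Qed.

Lemma C2_neq : C2 != C.
Proof. by apply: upd_neq; [lia | apply: ordSS_neq]. Qed.

Lemma Ct_neqC i : i < r -> Ct i != C.
Proof. by move=> hi; apply: upd_neq; [lia | apply: ordS_neq]. Qed.

Lemma Ct_neqC2 i : i < r -> Ct i != C2.
Proof.
move=> hi; apply/eqP => /(f_equal (fun f => ats f 0)).
rewrite /Ct /C2 !ats_upd; try lia.
rewrite eqxx; case: (eqVneq 0 i) => [<-|_] /eqP; last by rewrite eq_sym (negbTE (ordSS_neq _)).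
by rewrite (inj_eq (@ordS_inj _)) eq_sym (negbTE (ordS_neq _)).
Qed.

Lemma decB1 X C0 e : dec (X, B1, C0, e) = inr false.
Proof. by rewrite /dec B1_neq. Qed.

Lemma decC2 X e : dec (X, B, C2, e) = inr true.
Proof. by rewrite /dec eqxx /= eqxx. Qed.

Lemma decCt i X e : i < r -> dec (X, B, Ct i, e) = inl (i, ats A' i).
Proof.
move=> hi; rewrite /dec eqxx /= (negbTE (Ct_neqC2 hi)).
by rewrite (@dec_pick _ _ C i (ordS (ats C i)) hi (leq_trans hrs hst)) ?ordS_neq //= -ats_val.
Qed.

Lemma decL1 X : dec (X, B, C, L1) = inr false.
Proof. by rewrite /dec eqxx /= eq_sym (negbTE C2_neq) pick_none. Qed.

Lemma decL0 X : (X == A) || (X == A') -> dec (X, B, C, L0) = inr true.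
Proof. by move=> h; rewrite /dec eqxx /= eq_sym (negbTE C2_neq) pick_none /= h. Qed.

Lemma decC X e : dec (X, B, C, e) =
  if e == L1 then inr false
  else if (e == L0) && ((X == A) || (X == A')) then inr true
  else if [pick j : 'I_r | (X j != A j) && (X j != A' j)] is Some j then inl (val j, X j)
  else if [pick i : 'I_r | (A i != A' i) && (X == upd A i (A' i))] is Some i then inl (val i, A' i)
  else if [pick j : 'I_r | (A j != A' j) && (X == upd A' j (A j))] is Some j then
     (if [pick i : 'I_r | (A i != A' i) && (sg i == j)] is Some i then inl (val i, A' i) else inr true)
  else inr true.
Proof. by rewrite /dec eqxx /= eq_sym (negbTE C2_neq) pick_none. Qed.


Lemma inD_lt i : inD i -> i < r.
Proof. by case/andP. Qed.

Lemma upd_at n (f : {ffun 'I_n -> 'I_3}) i a (j : 'I_n) :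
  upd f i a j = if val j == i then a else f j.
Proof. exact: upd_val. Qed.

Lemma pick_off_none (Z : {ffun 'I_r -> 'I_3}) (e : 'I_3) : (forall j : 'I_r, (Z j == A j) || (Z j == A' j)) ->
  dec (Z, B, C, e) =
  if e == L1 then inr false
  else if (e == L0) && ((Z == A) || (Z == A')) then inr true
  else if [pick i : 'I_r | (A i != A' i) && (Z == upd A i (A' i))] is Some i then inl (val i, A' i)
  else if [pick j : 'I_r | (A j != A' j) && (Z == upd A' j (A j))] is Some j then
     (if [pick i : 'I_r | (A i != A' i) && (sg i == j)] is Some i then inl (val i, A' i) else inr true)
  else inr true.
Proof.
move=> H; rewrite decC.
have -> : [pick j : 'I_r | (Z j != A j) && (Z j != A' j)] = None.
  by case: pickP => // y; move: (H y); case: eqP; case: eqP.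
by [].
Qed.

Lemma decW i a (Z : {ffun 'I_r -> 'I_3}) : i < r -> a != ats A i -> a != ats A' i -> ats Z i = a ->
  (forall j : 'I_r, val j != i -> (Z j == A j) || (Z j == A' j)) ->
  dec (Z, B, C, L2) = inl (i, a).
Proof.
move=> hi ha ha' hz H; rewrite decC /=.
rewrite (@pick_uniq _ _ (Ordinal hi)) /=; first by rewrite -ats_val hz.
  by rewrite -!ats_val /= hz ha ha'.
move=> y; case: (eqVneq (nat_of_ord y) i) => [E _|ne]; first by apply: val_inj.
by move: (H y ne); case: eqP; case: eqP.
Qed.


Lemma atsE n (f g : {ffun 'I_n -> 'I_3}) i : f = g -> ats f i = ats g i.
Proof. by move=> ->. Qed.

Lemma inD_ne i : inD i -> ats A i != ats A' i.
Proof. by case/andP. Qed.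

Lemma XneA i : inD i -> Xv i != A.
Proof.
move=> hD; apply/eqP => /(atsE i); rewrite /Xv ats_upd ?inD_lt // eqxx => /eqP.
by rewrite eq_sym (negbTE (inD_ne hD)).
Qed.

Lemma XneA' i : inD i -> 1 < kk -> Xv i != A'.
Proof.
move=> hD hk; apply/eqP => /(atsE (sg i)).
rewrite /Xv ats_upd ?inD_lt ?sg_inD // (negbTE (sg_neq hD hk)) => /eqP.
by rewrite (negbTE (inD_ne (sg_inD hD))).
Qed.

Lemma YneA' i : inD i -> Yv i != A'.
Proof.
move=> hD; apply/eqP => /(atsE (sg i)); rewrite /Yv ats_upd ?inD_lt ?sg_inD // eqxx => /eqP.
by rewrite (negbTE (inD_ne (sg_inD hD))).
Qed.

Lemma YneA i : inD i -> 1 < kk -> Yv i != A.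
Proof.
move=> hD hk; apply/eqP => /(atsE i).
rewrite /Yv ats_upd ?inD_lt // eq_sym (negbTE (sg_neq hD hk)) => /eqP.
by rewrite eq_sym (negbTE (inD_ne hD)).
Qed.

Lemma betwX i (j : 'I_r) : (Xv i j == A j) || (Xv i j == A' j).
Proof.
rewrite /Xv upd_at; case: (eqVneq (nat_of_ord j) i) => [<-|]; last by rewrite eqxx.
by rewrite ats_val eqxx orbT.
Qed.

Lemma betwY i (j : 'I_r) : (Yv i j == A j) || (Yv i j == A' j).
Proof.
rewrite /Yv upd_at; case: (eqVneq (nat_of_ord j) (sg i)) => [<-|]; last by rewrite eqxx orbT.
by rewrite ats_val eqxx.
Qed.

Lemma pickX i (hi : i < r) : inD i ->
  [pick y : 'I_r | (A y != A' y) && (Xv i == upd A y (A' y))] = Some (Ordinal hi).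
Proof.
move=> hD; apply: pick_uniq.
  by rewrite /= -!ats_val /= inD_ne //= /Xv.
move=> y /andP[hy /eqP E]; have := congr1 (fun f : {ffun 'I_r -> 'I_3} => f y) E; rewrite /Xv !upd_at eqxx.
case: (eqVneq (nat_of_ord y) i) => [E2 _|ne E3]; first by apply: val_inj.
by move: hy; rewrite E3 eqxx.
Qed.

Lemma pickY i (hs : sg i < r) : inD i ->
  [pick y : 'I_r | (A y != A' y) && (Yv i == upd A' y (A y))] = Some (Ordinal hs).
Proof.
move=> hD; apply: pick_uniq.
  by rewrite /= -!ats_val /= inD_ne ?sg_inD //= /Yv.
move=> y /andP[hy /eqP E]; have := congr1 (fun f : {ffun 'I_r -> 'I_3} => f y) E; rewrite /Yv !upd_at eqxx.
case: (eqVneq (nat_of_ord y) (sg i)) => [E2 _|ne E3]; first by apply: val_inj.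
by move: hy; rewrite E3 eqxx.
Qed.

Lemma pickSg i (hi : i < r) : inD i ->
  [pick y : 'I_r | (A y != A' y) && (sg y == sg i)] = Some (Ordinal hi).
Proof.
move=> hD; apply: pick_uniq; first by rewrite /= -inD_ord hD eqxx.
move=> y /andP[hy /eqP E]; apply: val_inj => /=.
by apply: sg_inj E; rewrite ?inD_ord.
Qed.

Lemma decX i (e : 'I_3) : inD i -> e != L1 -> ((e == L0) ==> (Xv i != A')) ->
  dec (Xv i, B, C, e) = inl (i, ats A' i).
Proof.
move=> hD h1 h0; have hi := inD_lt hD.
rewrite pick_off_none; last exact: betwX.
rewrite (negbTE h1) (negbTE (XneA hD)) /=.
have -> : (e == L0) && (Xv i == A') = false by case: (e == L0) h0 => //= /negbTE.
by rewrite (pickX hi hD) /= -ats_val.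
Qed.

Lemma decY i (e : 'I_3) : inD i -> 1 < kk -> e != L1 ->
  dec (Yv i, B, C, e) = inl (i, ats A' i).
Proof.
move=> hD hk h1; have hi := inD_lt hD; have hs := inD_lt (sg_inD hD).
rewrite pick_off_none; last exact: betwY.
rewrite (negbTE h1) (negbTE (YneA hD hk)) (negbTE (YneA' hD)) andbF.
case: pickP => [y /andP[hy /eqP E]|_].
  have := congr1 (fun f : {ffun 'I_r -> 'I_3} => f (Ordinal hi)) E; rewrite /Yv !upd_at /=.
  rewrite eq_sym (negbTE (sg_neq hD hk)).
  case: (eqVneq i (nat_of_ord y)) => [E2 _|ne E3]; first by rewrite E2 ats_val.
  by move: (inD_ne hD); rewrite -[i]/(val (Ordinal hi)) !ats_val E3 eqxx.
by rewrite (pickY hs hD) /= (pickSg hi hD) -ats_val.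
Qed.


Lemma kk1 i : kk = 1 -> inD i -> A' = Xv i.
Proof.
move=> h1 hD; have hi := inD_lt hD.
have [x Ex] : exists x, Dset = [set x] by apply/cards1P; apply/eqP; exact: h1.
have eqx (j : 'I_r) : A j != A' j -> j = x.
  by move=> hj; apply/set1P; rewrite -Ex inE.
apply/ffunP => j; rewrite /Xv upd_at.
case: (eqVneq (nat_of_ord j) i) => [E|ne].
  by rewrite -E ats_val.
case: (eqVneq (A j) (A' j)) => // /eqx Ej.
have := eqx (Ordinal hi); rewrite -!ats_val /= (inD_ne hD) => /(_ isT) Ei.
by move: ne; rewrite Ej -Ei eqxx.
Qed.

Lemma sizeXY i : inD i -> 1 < kk -> size (wseq (Xv i) (Yv i)) + 2 <= kk.
Proof.
move=> hD hk; have hi := inD_lt hD; have hs := inD_lt (sg_inD hD).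
set ii := Ordinal hi; set jj := Ordinal hs.
have iiD : ii \in Dset by rewrite inE -inD_ord.
have jjD : jj \in Dset :\ ii.
  rewrite !inE -inD_ord sg_inD // andbT; apply/negP => /eqP/(f_equal val) /= E.
  by move: (sg_neq hD hk); first [by rewrite -E eqxx | by rewrite E eqxx].
have sub : [set j | Xv i j != Yv i j] \subset Dset :\ ii :\ jj.
  apply/subsetP => j; rewrite !inE /Xv /Yv !upd_at.
  case: (eqVneq (nat_of_ord j) i) => [Ei|nei].
    have Ej : j = ii by apply: val_inj.
    by rewrite Ej /= [i == sg i]eq_sym (negbTE (sg_neq hD hk)) -[A' ii]ats_val /= eqxx.
  case: (eqVneq (nat_of_ord j) (sg i)) => [Es|nes].
    have Ej2 : j = jj by apply: val_inj.
    by rewrite Ej2 /= eqxx -[A jj]ats_val /= eqxx.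
  move=> ->; rewrite andbT; apply/andP; split; apply/eqP => /(f_equal val) /= E.
    by move: nes; first [by rewrite -E eqxx | by rewrite E eqxx].
  by move: nei; first [by rewrite -E eqxx | by rewrite E eqxx].
rewrite wseq_size.
have -> : #|[pred j | Xv i j != Yv i j]| = #|[set j | Xv i j != Yv i j]|.
  by apply: eq_card => j; rewrite inE.
have := subset_leq_card sub.
rewrite /kk (cardsD1 ii Dset) (cardsD1 jj (Dset :\ ii)) iiD jjD.
lia.
Qed.


Lemma notin_lift (X : {ffun 'I_r -> 'I_3}) B0 C0 e B' C' (sq : seq {ffun 'I_r -> 'I_3}) :
  C0 != C' -> ((X, B0, C0, e) : V) \in map (lift2 B' C') sq = false.
Proof. by move=> h; apply/negP => /mapP[Z _ [] _ _ E _]; move: h; rewrite E eqxx. Qed.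

Lemma notin_liftB (X : {ffun 'I_r -> 'I_3}) B0 C0 e B' C' (sq : seq {ffun 'I_r -> 'I_3}) :
  B0 != B' -> ((X, B0, C0, e) : V) \in map (lift2 B' C') sq = false.
Proof. by move=> h; apply/negP => /mapP[Z _ [] _ E _ _]; move: h; rewrite E eqxx. Qed.

Definition u2 : V := (A, B, C, L2).
Definition v2 : V := (A', B, C, L2).

Definition WW i a : seq V := lift2 B C (upd A i a) ::
  map (lift2 B C) (wseq (upd A i a) (upd A' i a)) ++ [:: v2].
Definition WA i : seq V := if kk == 1 then [:: v2] else
  [:: lift2 B C (Xv i); (Xv i, B, C, L0); (Xv i, B, Ct i, L0); lift2 B (Ct i) (Xv i)] ++
  map (lift2 B (Ct i)) (wseq (Xv i) (Yv i)) ++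
  [:: (Yv i, B, Ct i, L0); (Yv i, B, C, L0); lift2 B C (Yv i); v2].
Definition WE0 : seq V := [:: (A, B, C, L0); (A, B, C2, L0); lift2 B C2 A] ++
   map (lift2 B C2) (wseq A A') ++ [:: (A', B, C2, L0); (A', B, C, L0); v2].
Definition WE1 : seq V := [:: (A, B, C, L1); (A, B1, C, L1); lift2 B1 C A] ++
   map (lift2 B1 C) (wseq A A') ++ [:: (A', B1, C, L1); (A', B, C, L1); v2].

Definition OK (W : seq V) (l : (nat * 'I_3) + bool) :=
  [/\ path adj u2 W, last u2 W = v2, u2 \notin W, size W <= r + 6 &
      (forall x, x \in W -> x != v2 -> dec x = l) /\ dec (head u2 W) = l].

Lemma uv2 : u2 != v2.
Proof. by rewrite /u2 /v2 !xpair_eqE (negbTE hAA). Qed.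

Lemma WW_ok i a : i < r -> a != ats A i -> a != ats A' i -> OK (WW i a) (inl (i, a)).
Proof.
move=> hi ha ha'.
have hZ : forall Z : {ffun 'I_r -> 'I_3}, (Z == upd A i a) || (Z \in wseq (upd A i a) (upd A' i a)) ->
    dec (lift2 B C Z) = inl (i, a).
  move=> Z hz; apply: decW => //.
    rewrite -[i]/(val (Ordinal hi)) ats_val.
    case/orP: hz => [/eqP -> | /wseq_mem /(_ (Ordinal hi))]; first by rewrite upd_at eqxx.
    by rewrite !upd_at eqxx orbb => /eqP.
  move=> j nj; case/orP: hz => [/eqP -> | /wseq_mem /(_ j)]; first by rewrite upd_at (negbTE nj) eqxx.
  by rewrite !upd_at (negbTE nj).
split.
- have hs1 : ats A i != a by rewrite eq_sym.
  have hs2 : ats A' i != a by rewrite eq_sym.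
  rewrite /WW /= adjE3 ?diff1_updn //=.
  by apply: mid_path; rewrite /= adjE3 ?diff1_updn'.
- by rewrite /WW last_cons last_cat.
- rewrite /WW !(mem_cat, inE); apply/negP; case/or3P.
  + by move/eqP => [] /esym /eqP; rewrite (negbTE (upd_neq hi _)) // eq_sym.
  + case/mapP => Z zin [] EZ; move: zin; rewrite -EZ => /wseq_mem /(_ (Ordinal hi)).
    rewrite !upd_at eqxx orbb => /eqP E; move: ha; rewrite -[i]/(val (Ordinal hi)) ats_val E.
    by rewrite eqxx.
  + by move: uv2 => /negbTE ->.
- by rewrite /WW /= size_cat /= size_map; have := wseq_size_le (upd A i a) (upd A' i a); lia.
split.
  move=> x; rewrite /WW !(mem_cat, inE) => /or3P[/eqP -> _|/mapP[Z zin ->] _|/eqP -> ]; last by rewrite eqxx.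
    by apply: hZ; rewrite eqxx.
  by apply: hZ; rewrite zin orbT.
by apply: hZ; rewrite eqxx.
Qed.


Lemma WA_ok i : inD i -> OK (WA i) (inl (i, ats A' i)).
Proof.
move=> hD; have hi := inD_lt hD; have hsD := sg_inD hD; have hs := inD_lt hsD.
have hit : i < t by lia.
have nA := inD_ne hD; have nA2 : ats A' i != ats A i by rewrite eq_sym.
have nS := inD_ne hsD.
rewrite /WA; case: eqP => [k1|k1].
  have E := kk1 k1 hD.
  split => //.
  - rewrite /= andbT /u2 /v2 adjE3 //.
    by transitivity (diff1 A (Xv i)); [rewrite -E | apply: diff1_updn].
  - by rewrite inE uv2.
  - by rewrite /=; lia.
  split; first by move=> x; rewrite inE => ->.
  rewrite /=; transitivity (dec (Xv i, B, C, L2)); first by rewrite /v2 -E.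
  by apply: decX.
have hk : 1 < kk by have := kk_pos; lia.
have XA' := XneA' hD hk.
split.
- rewrite /= adjE3 ?diff1_updn //= adjE0 //= adjE1 ?diff1_updn ?ordS_neq //= adjE0 //=.
  apply: mid_path; rewrite /= adjE0 //= adjE1 ?diff1_updn' ?ordS_neq //= adjE0 //=.
  by rewrite adjE3 ?diff1_updn'.
- by rewrite [_ ++ _]/= last_cons last_cons last_cons last_cons last_cat.
- have f1 : (A == Xv i) = false by rewrite eq_sym; apply/negbTE/XneA.
  have f2 : (C == Ct i) = false by rewrite eq_sym; apply/negbTE/Ct_neqC.
  have f3 : (A == Yv i) = false by rewrite eq_sym; apply/negbTE/YneA.
  have f4 : (C != Ct i) by rewrite f2.
  rewrite !(mem_cat, inE) !negb_or /u2 notin_lift // /v2 /lift2 !xpair_eqE f1 f2 f3 /=.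
  by rewrite (negbTE hAA).
- have := sizeXY hD hk; have := kk_le.
  by rewrite /= size_cat size_map /=; lia.
split; last by rewrite [head _ _]/= decX.
move=> x; rewrite !(mem_cat, inE).
move=> /orP[/orP[/eqP->|/orP[/eqP->|/orP[/eqP->|/eqP->]]]|
            /orP[/mapP[Z _ ->]|/orP[/eqP->|/orP[/eqP->|/orP[/eqP->|/eqP->]]]]];
  rewrite ?eqxx // => _; rewrite ?decX ?decY ?decCt //.
Qed.

Lemma WE0_ok : OK WE0 (inr true).
Proof.
have h0t : 0 < t by lia.
have nC : ordS (ordS (ats C 0)) != ats C 0 by apply: ordSS_neq.
rewrite /WE0; split.
- rewrite /= adjE0 //= adjE1 ?diff1_updn //= adjE0 //=.
  by apply: mid_path; rewrite /= adjE0 //= adjE1 ?diff1_updn' //= adjE0.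
- by rewrite [_ ++ _]/= last_cons last_cons last_cons last_cat.
- rewrite !(mem_cat, inE); apply/negP.
  move=> /orP[/orP[/eqP[] //|/orP[/eqP[] //|/eqP[] E]]|/orP[/mapP[Z _ [] _ E]|/orP[/eqP[] //|/orP[/eqP[] //|/eqP E]]]].
  + by move: C2_neq; first [by rewrite -E eqxx | by rewrite E eqxx].
  + by move: C2_neq; first [by rewrite -E eqxx | by rewrite E eqxx].
  + by move: uv2; first [by rewrite -E eqxx | by rewrite E eqxx].
- by rewrite /= size_cat size_map /=; have := wseq_size_le A A'; lia.
split; last by rewrite [head _ _]/= decL0 ?eqxx.
move=> x; rewrite !(mem_cat, inE).
move=> /orP[/orP[/eqP->|/orP[/eqP->|/eqP->]]|/orP[/mapP[Z _ ->]|/orP[/eqP->|/orP[/eqP->|/eqP->]]]];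
  rewrite ?eqxx // => _; rewrite ?decL0 ?decC2 ?eqxx ?orbT //.
Qed.

Lemma WE1_ok : OK WE1 (inr false).
Proof.
have h0s : 0 < s by lia.
have nB : ordS (ats B 0) != ats B 0 by apply: ordS_neq.
rewrite /WE1; split.
- rewrite /= adjE0 //= adjE2 ?diff1_updn //= adjE0 //=.
  by apply: mid_path; rewrite /= adjE0 //= adjE2 ?diff1_updn' //= adjE0.
- by rewrite [_ ++ _]/= last_cons last_cons last_cons last_cat.
- have f2 : (B == B1) = false by rewrite eq_sym; apply/negbTE/B1_neq.
  have f4 : B != B1 by rewrite f2.
  rewrite !(mem_cat, inE) !negb_or /u2 notin_liftB // /v2 /lift2 !xpair_eqE f2 /=.
  have f5 : (L2 == L1) = false by [].
  by rewrite f5 (negbTE hAA) !andbF.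
- by rewrite /= size_cat size_map /=; have := wseq_size_le A A'; lia.
split; last by rewrite [head _ _]/= decL1.
move=> x; rewrite !(mem_cat, inE).
move=> /orP[/orP[/eqP->|/orP[/eqP->|/eqP->]]|/orP[/mapP[Z _ ->]|/orP[/eqP->|/orP[/eqP->|/eqP->]]]];
  rewrite ?eqxx // => _; rewrite ?decL1 ?decB1 //.
Qed.


Definition W2 (n : 'I_(2 * r + 2)) : seq V :=
  if n < 2 * r then
    (if ab (odd n) (ats A n./2) == ats A' n./2 then WA n./2 else WW n./2 (ab (odd n) (ats A n./2)))
  else if n == 2 * r :> nat then WE0 else WE1.

Lemma W2_ok n : OK (W2 n) (lab r (ats A) n).
Proof.
rewrite /W2 /lab; case: ltnP => hn.
  have hi := half_lt hn.
  case: eqP => E.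
    have hD : inD n./2 by rewrite /inD hi -E eq_sym ab_neq.
    by have := WA_ok hD; rewrite -E.
  by apply: WW_ok => //; [apply: ab_neq | apply/eqP].
by case: eqP => _; [apply: WE0_ok | apply: WE1_ok].
Qed.

Theorem case2 : exists P : 'I_(2 * r + 2) -> seq V,
    (forall i, is_uv_path adj u2 v2 (P i) /\ size (P i) <= r + 6) /\
    (forall i j, i != j -> P i != P j /\ internally_disjoint u2 v2 (P i) (P j)).
Proof.
apply: (@frame _ adj u2 v2 _ _ (fun n => lab r (ats A) n) dec W2 (fun n => head u2 (W2 n)) (r + 6)
   uv2 (@lab_inj r (ats A))) => n; case: (W2_ok n) => // _ _ _ _ [] //.
Qed.

End Case2.

End M2.

Unset Implicit Arguments.

Theorem lemma10 (r s t : nat) (hr : 1 <= r) (hrs : r <= s) (hst : s <= t)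
  (u v : E3Cvert r s t) :
  u != v -> vB u = vB v -> vC u = vC v -> vd u = vd v ->
  exists P : 'I_(2 * r + 2) -> seq (E3Cvert r s t),
    (forall i, is_uv_path (@E3C_adj r s t) u v (P i) /\ size (P i) <= r + 6) /\
    (forall i j, i != j -> P i != P j /\ internally_disjoint u v (P i) (P j)).
Proof.
case: u => [[[A B] C] d]; case: v => [[[A' B'] C'] d'].
rewrite /vB /vC /vd /= => uv EB EC Ed; subst B' C' d'.
have hAA : A != A' by move: uv; rewrite !xpair_eqE !eqxx !andbT.
case: d uv => [[|[|[|m]]] hd] uv //.
- have -> : Ordinal hd = L0 by apply: val_inj.
  exact: (M0.case0 hr hrs hst B C hAA).
- have -> : Ordinal hd = L1 by apply: val_inj.
  exact: (M1.case1 hr hrs hst B C hAA).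
- have -> : Ordinal hd = L2 by apply: val_inj.
  exact: (M2.case2 hr hrs hst B C hAA).
Qed.
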